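(* Let $\mathcal{C}\in(\mathbb{R}^I)^{\otimes d}$ be symmetric and let $\mathcal{M}\subset(\mathbb{R}^I)^{\otimes(d-1)}$ be a finite set of symmetric decomposable tensors. Then $$\operatorname{srk}\operatorname{SAdj}(\mathcal{C},\mathcal{M})\le\operatorname{minsrk}(\mathcal{C}\bmod\mathcal{M})+d\dim\operatorname{Span}\mathcal{M}.$$
   Context: All tensors are real; symmetric rank $\operatorname{srk}$ is the minimal number of summands $\lambda v^{\otimes d}$. Symmetric adjoining: let $\mathcal{M}$ be indexed by a finite set $W$ disjoint from $I$, with $\mathcal{M}^{(w)}$ the element indexed by $w$. $\operatorname{SAdj}(\mathcal{C},\mathcal{M})\in(\mathbb{R}^{I\cup W})^{\otimes d}$ is the tensor $\mathcal{T}$ with $\mathcal{T}(k_1|\dots|k_d)=\mathcal{C}(k_1|\dots|k_d)$ if all $k_i\in I$; $\mathcal{T}(k_1|\dots|k_{j-1}|w|k_{j+1}|\dots|k_d)=\mathcal{M}^{(w)}(k_1|\dots|k_{j-1}|k_{j+1}|\dots|k_d)$ if $w\in W$ is in position $j$ and all other $k_h\in I$; and all other entries (two or more indices in $W$) equal $0$. $\mathcal{C}\bmod\mathcal{M}$ is the set of tensors with entries $\mathcal{C}(k_1|\dots|k_d)+\sum_{j=1}^d M_j^{(k_j)}(k_1|\dots|\widehat{k_j}|\dots|k_d)$ with arbitrary $M_j^{(k_j)}\in\operatorname{Span}\mathcal{M}$ chosen independently for each $j$ and each $k_j\in I$. $\operatorname{minsrk}\mathcal{A}$ is the minimal symmetric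 rank of a symmetric tensor in $\mathcal{A}$. *)

(* Defs.v *)
From HB Require Import structures.
From mathcomp Require Import all_boot all_order fingroup perm all_algebra.
From mathcomp Require Import reals.
Set Implicit Arguments. Unset Strict Implicit. Unset Printing Implicit Defensive.
Import Order.TTheory GRing.Theory Num.Theory.
Local Open Scope ring_scope.

(* A tensor of order n over the (finite) index set J with real entries:
   an element of (R^J)^{\otimes n}, i.e. a function of the multi-index
   (k_1 | ... | k_n), encoded as k : {ffun 'I_n -> J}. *)
Definition tensor (R : realType) (J : finType) (n : nat) :=
  {ffun {ffun 'I_n -> J} -> R^o}.

Definition sym_tensor (R : realType) (J : finType) (n : nat) (T : tensor R J n) :=
  forall (s : 'S_n) (k : {ffun 'I_n -> J}), T [ffun i => k (s i)] = T k.

Definition rank_one (R : realType) (J : finType) (n : nat) (lam : R) (v : J -> R)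
  : tensor R J n := [ffun k : {ffun 'I_n -> J} => lam * \prod_(i < n) v (k i)].

Definition sym_decomposable (R : realType) (J : finType) (n : nat) (T : tensor R J n) :=
  exists (lam : R) (v : J -> R), T = rank_one n lam v.

Definition srk_le (R : realType) (J : finType) (n : nat) (T : tensor R J n) (r : nat) :=
  exists (lam : 'I_r -> R) (v : 'I_r -> J -> R),
    T = \sum_(t < r) rank_one n (lam t) (v t).

Definition SpanM (R : realType) (I W : finType) (n : nat) (M : W -> tensor R I n)
  : {vspace tensor R I n} := <<[seq M w | w <- enum W]>>%VS.

(* Symmetric adjoining SAdj(C, M) in (R^{I \cup W})^{\otimes d}, where the
   disjoint union I \cup W is the sum type I + W.  Each of the sums below has
   at most one nonzero term:
   - the first is C(k) when all k_i are in I (and 0 otherwise);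
   - the second is M^(w)(k_1|..|^k_j|..|k_d) when exactly position j carries
     w \in W and all other indices are in I (and 0 otherwise).
   Entries with two or more indices in W are therefore 0. *)
Definition SAdj (R : realType) (I W : finType) (d : nat)
  (C : tensor R I d) (M : W -> tensor R I d.-1) : tensor R (I + W)%type d :=
  [ffun k : {ffun 'I_d -> (I + W)%type} =>
     \sum_(c : {ffun 'I_d -> I} | [forall i, k i == inl (c i)]) C c
   + \sum_(j < d) \sum_(w : W)
       \sum_(m : {ffun 'I_d.-1 -> I}
               | (k j == inr w) && [forall i, k (lift j i) == inl (m i)]) M w m].

(* T \in C mod M: T(k) = C(k) + \sum_j F_j^{(k_j)}(k_1|..|^k_j|..|k_d)
   with F_j^{(i)} \in Span M chosen independently for each j and each i \in I. *)
Definition in_mod (R : realType) (I W : finType) (d : nat)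
  (C : tensor R I d) (M : W -> tensor R I d.-1) (T : tensor R I d) :=
  exists F : 'I_d -> I -> tensor R I d.-1,
    (forall j i, F j i \in SpanM M) /\
    forall k : {ffun 'I_d -> I},
      T k = C k + \sum_(j < d) F j (k j) [ffun i => k (lift j i)].

(* Main.v *)
Require Import Defs.
From HB Require Import structures.
From mathcomp Require Import all_boot all_order fingroup perm all_algebra.
From mathcomp Require Import reals zify ring.
Import Order.TTheory GRing.Theory Num.Theory.
Local Open Scope ring_scope.
Set Implicit Arguments. Unset Strict Implicit. Unset Printing Implicit Defensive.
Lemma prod_lift (R : comNzRingType) n (F : 'I_n -> R) (j : 'I_n) :
  \prod_(i < n.-1) F (lift j i) = \prod_(i < n | i != j) F i.
Proof.
rewrite [RHS]big_mkcond (bigD1_ord j) //= eqxx mul1r.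
by apply: eq_bigr => i _; rewrite eq_sym neq_lift.
Qed.

Lemma exists_basis_sub (K : fieldType) (vT : vectType K) (X : seq vT) :
  exists Y, {subset Y <= X} /\ basis_of <<X>>%VS Y.
Proof.
elim: X => [|x X [Y [sYX bY]]].
  by exists [::]; split => //; rewrite span_nil; apply: nil_basis.
have eY : <<Y>>%VS = <<X>>%VS by apply: span_basis.
case xX: (x \in <<X>>%VS).
  exists Y; split; first by move=> y /sYX; rewrite inE => ->; rewrite orbT.
  rewrite span_cons; move: bY; rewrite /basis_of => /andP[/eqP -> ->].
  by rewrite andbT; apply/eqP; symmetry; apply/addv_idPr; rewrite -memvE xX.
exists (x :: Y); split.
  by move=> y; rewrite !inE => /orP[->//|/sYX ->]; rewrite orbT.
rewrite /basis_of !span_cons eY eqxx /= free_cons eY xX /=.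
by move: bY => /andP[].
Qed.


Lemma srk_le_add (R : realType) (J : finType) n (A B : tensor R J n) r1 r2 :
  srk_le A r1 -> srk_le B r2 -> srk_le (A + B) (r1 + r2).
Proof.
move=> [l1 [v1 ->]] [l2 [v2 ->]].
exists (fun t => match split t with inl a => l1 a | inr b => l2 b end).
exists (fun t => match split t with inl a => v1 a | inr b => v2 b end).
rewrite big_split_ord /=; congr (_ + _); apply: eq_bigr => i _.
  by have /= -> := unsplitK (inl i : 'I_r1 + 'I_r2).
by have /= -> := unsplitK (inr i : 'I_r1 + 'I_r2).
Qed.

Lemma srk_le_sum (R : realType) (J : finType) n p m (G : 'I_m -> tensor R J n) :
  (forall b, srk_le (G b) p) -> srk_le (\sum_(b < m) G b) (m * p).
Proof.
elim: m G => [|m IH] G HG.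
  by rewrite big_ord0; exists (fun _ => 0), (fun _ _ => 0); rewrite big_ord0.
rewrite big_ord_recr /= mulSn addnC; apply: srk_le_add; last exact: HG.
by apply: IH => b; apply: HG.
Qed.

Lemma allinl (R : realType) (I W : finType) n (k : 'I_n -> (I + W)%type)
  (P : 'I_n -> (I + W)%type -> R) :
  (forall i w, P i (inr w) = 0) ->
  \prod_(i < n) P i (k i) =
  \sum_(c : {ffun 'I_n -> I} | [forall i, k i == inl (c i)]) \prod_(i < n) P i (inl (c i)).
Proof.
move=> P0.
case: (boolP [exists i, if k i is inr _ then true else false]) => [/existsP [i0 Hi0]|Hn].
  case Ek: (k i0) Hi0 => [x|w] // _.
  rewrite (bigD1 i0) //= Ek P0 mul0r big_pred0 // => c.
  by apply/negbTE/negP => /forallP /(_ i0); rewrite Ek.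
have [c0 Hc0] : exists c0 : {ffun 'I_n -> I}, forall i, k i = inl (c0 i).
  have [u Hu] : exists u : 'I_n -> I, forall i, k i = inl (u i).
    apply: (@fin_all_exists _ (fun _ => I) (fun i x => k i = inl x)) => i; case Ek: (k i) => [x|w]; first by exists x.
    by move: Hn => /existsP; case; exists i; rewrite Ek.
  by exists (finfun u) => i; rewrite ffunE.
rewrite (big_pred1 c0).
  by apply: eq_bigr => i _; rewrite Hc0.
move=> c /=; apply/forallP/eqP => [H|->]; last by move=> i; rewrite Hc0.
by apply/ffunP => i; move: (H i); rewrite Hc0 => /eqP [->].
Qed.

Lemma weights (R : realType) d : exists (c t : 'I_d -> R),
  forall p, (p < d)%N -> \sum_(s < d) c s * t s ^+ p = (p == d.-1)%:R.
Proof.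
pose t (s : 'I_d) : R := (s : nat)%:R.
pose V := Vandermonde d (\row_s t s).
have VU : V \in unitmx.
  rewrite unitmxE unitfE det_Vandermonde.
  apply/prodf_neq0 => i _.
  rewrite big_mkcond; apply/prodf_neq0 => j _; case: ifP => ij; last exact: oner_neq0.
  by rewrite !mxE subr_eq0 eqr_nat; apply/eqP => E; move: ij; rewrite E ltnn.
pose e : 'cV[R]_d := \col_(p < d) (p == d.-1 :> nat)%:R.
exists (fun s => (invmx V *m e) s 0); exists t => p pd.
have := congr1 (fun A : 'cV[R]_d => A (Ordinal pd) 0) (mulKVmx VU e).
rewrite /= !mxE => <-; apply: eq_bigr => s _.
by rewrite !mxE mulrC.
Qed.


Lemma prod_lin_coef (R : comNzRingType) (n l : nat -> R) k :
  let P := \prod_(j < k) ((l j)%:P * 'X + (n j)%:P) in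
  [/\ (size P <= k.+1)%N, P`_k = \prod_(j < k) l j &
   (P * 'X)`_k = \sum_(j < k) n j * \prod_(i < k | i != j) l i].
Proof.
elim: k => [|k [IH1 IH2 IH3]].
  by rewrite /= !big_ord0 coefMX /= coefC /= size_poly1.
set P := \prod_(j < k) _ in IH1 IH2 IH3 *.
rewrite /= big_ord_recr /= -/P.
have E i : (P * ((l k)%:P * 'X + (n k)%:P))`_i =
    (if i == 0%N then 0 else P`_i.-1 * l k) + P`_i * n k.
  by rewrite mulrDr mulrA coefD coefMX !coefMC.
split.
- apply: leq_trans (size_polyMleq _ _) _.
  have H2 : (size ((l k)%:P * 'X + (n k)%:P)%R <= 2)%N.
    rewrite size_MXaddC; case: ifP => // _.
    by have := size_polyC_leq1 (l k).
  move: H2 IH1; set a := size _; set b := size P; lia.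
- rewrite E /= (nth_default 0 (leq_trans IH1 (leqnn _))) mul0r addr0 IH2.
  by rewrite big_ord_recr.
- rewrite coefMX /= E.
  have -> : (if k == 0%N then 0 else P`_k.-1 * l k) = (P * 'X)`_k * l k.
    by rewrite coefMX; case: ifP; rewrite ?mul0r.
  rewrite IH3 IH2 big_ord_recr /=.
  have -> : \prod_(i < k.+1 | i != ord_max) l i = \prod_(i < k) l i.
    rewrite big_mkcond big_ord_recr /= eqxx mulr1; apply: eq_bigr => i _.
    by rewrite ifT // neq_ltn /= ltn_ord.
  congr (_ + _); last by rewrite mulrC.
  rewrite mulr_suml; apply: eq_bigr => j _.
  rewrite [in RHS]big_mkcond big_ord_recr /= ifT; last first.
    by rewrite neq_ltn /= ltn_ord orbT.
  rewrite -mulrA; congr (_ * (_ * _)).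
  rewrite [LHS]big_mkcond; apply: eq_bigr => i _.
  by rewrite -val_eqE /=.
Qed.
Lemma key (R : realType) d' (c t : 'I_d'.+1 -> R)
  (Hw : forall p, (p < d'.+1)%N -> \sum_s c s * t s ^+ p = (p == d')%:R)
  (n l : 'I_d'.+1 -> R) :
  \sum_s c s * \prod_j (n j + t s * l j) =
  \sum_j n j * \prod_(i < d') l (lift j i) + (\sum_s c s * t s ^+ d'.+1) * \prod_j l j.
Proof.
pose n' (x : nat) := n (inord x); pose l' (x : nat) := l (inord x).
have [H1 H2 H3] := prod_lin_coef n' l' d'.+1.
set P := \prod_(j < d'.+1) _ in H1 H2 H3.
have HP x : P.[x] = \prod_j (n j + x * l j).
  rewrite horner_prod; apply: eq_bigr => j _.
  by rewrite !hornerE /n' /l' inord_val addrC mulrC.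
have HC x : P.[x] = \sum_(p < d'.+2) P`_p * x ^+ p by apply: horner_coef_wide.
transitivity (\sum_s \sum_(p < d'.+2) c s * (P`_p * t s ^+ p)).
  by apply: eq_bigr => s _; rewrite -mulr_sumr -HC HP.
rewrite exchange_big /=.
under eq_bigr => p _ do
  (rewrite (_ : \sum_s c s * (P`_p * t s ^+ p) = P`_p * \sum_s c s * t s ^+ p);
   last by rewrite mulr_sumr; apply: eq_bigr => s _; rewrite mulrCA).
rewrite big_ord_recr /= H2; congr (_ + _); last first.
  by rewrite mulrC; congr (_ * _); apply: eq_bigr => j _; rewrite /l' inord_val.
rewrite (eq_bigr (fun p : 'I_d'.+1 => P`_p * (p == d' :> nat)%:R)); last first.
  by move=> p _; rewrite Hw.
rewrite big_ord_recr /= eqxx mulr1 big1 ?add0r; last first.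
  by move=> p _; rewrite ltn_eqF ?mulr0.
have := coefMX P d'.+1; rewrite /= => <-; rewrite H3.
apply: eq_bigr => j _; rewrite /n' inord_val -prod_lift; congr (_ * _).
by apply: eq_bigr => i _; rewrite /l' inord_val.
Qed.
Lemma key2 (R : realType) d' (c t : 'I_d'.+1 -> R)
  (Hw : forall p, (p < d'.+1)%N -> \sum_s c s * t s ^+ p = (p == d')%:R)
  (n l : 'I_d'.+1 -> R) :
  \sum_s c s * \prod_j ((n j - (\sum_s c s * t s ^+ d'.+1) / d'.+1%:R * l j) + t s * l j) =
  \sum_j n j * \prod_(i < d') l (lift j i).
Proof.
rewrite key //; set g := \sum_(s < d'.+1) c s * t s ^+ d'.+1.
have E j : l j * \prod_(i < d') l (lift j i) = \prod_j l j.
  by rewrite [RHS](bigD1_ord j).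
rewrite (eq_bigr (fun j => n j * \prod_(i < d') l (lift j i) - g / d'.+1%:R * \prod_j l j)); last first.
  by move=> j _; rewrite mulrBl -[_ / _ * l j * _]mulrA E.
rewrite sumrB sumr_const card_ord -addrA [X in _ + X](_ : _ = 0) ?addr0 //.
have hd : d'.+1%:R != 0 :> R by rewrite pnatr_eq0.
rewrite -mulr_natr; field.
by rewrite addrC natr1.
Qed.

Lemma symavg (R : realType) d' (x : R) (K : 'I_d'.+1 -> 'I_d'.+1 -> R) :
  (forall s : 'S_d'.+1, x = \sum_j K j (s j)) ->
  d'.+1%:R * x = \sum_j \sum_j2 K j j2.
Proof.
move=> H.
pose sg (a : 'I_d'.+1) : 'S_d'.+1 := perm (addrI a).
transitivity (\sum_(a < d'.+1) \sum_j K j (sg a j)).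
  rewrite (eq_bigr (fun _ => x)); last by move=> a _; rewrite -H.
  by rewrite sumr_const card_ord mulr_natl.
rewrite exchange_big; apply: eq_bigr => j _.
rewrite [RHS](reindex_inj (addIr j)); apply: eq_bigr => a _.
by rewrite permE.
Qed.

Lemma prod_perm_lift (R : comNzRingType) n (s : 'S_n) (f : 'I_n -> R) j :
  \prod_(i < n.-1) f (s (lift j i)) = \prod_(i < n.-1) f (lift (s j) i).
Proof.
rewrite (prod_lift (fun i => f (s i))) prod_lift [RHS](reindex_inj (@perm_inj _ s)) /=.
by apply: eq_bigl => i; rewrite (inj_eq perm_inj).
Qed.

Lemma rank_oneE (R : realType) (J : finType) n lam (v : J -> R) k :
  rank_one n lam v k = lam * \prod_(i < n) v (k i).
Proof. by rewrite ffunE. Qed.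

Lemma term_allinl (R : realType) (I W : finType) n (k : 'I_n -> (I + W)%type) j
  (N L : (I + W)%type -> R) :
  (forall w, N (inr w) = 0) -> (forall w, L (inr w) = 0) ->
  N (k j) * \prod_(i < n.-1) L (k (lift j i)) =
  \sum_(cc : {ffun 'I_n -> I} | [forall i, k i == inl (cc i)])
     N (inl (cc j)) * \prod_(i < n.-1) L (inl (cc (lift j i))).
Proof.
move=> N0 L0.
have E (h : 'I_n -> (I + W)%type) :
    N (h j) * \prod_(i < n.-1) L (h (lift j i)) =
    \prod_(i0 < n) (if i0 == j then N else L) (h i0).
  rewrite (bigD1_ord j) //= eqxx; congr (_ * _); apply: eq_bigr => i _.
  by rewrite eq_sym (negbTE (neq_lift j i)).
rewrite E (@allinl R I W n k (fun i0 => if i0 == j then N else L)); last by move=> i w; case: (i == j).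
by apply: eq_bigr => cc _; rewrite (E (fun i => inl (cc i))).
Qed.

Lemma rearr (R : realType) m d (di : R) (mu : 'I_m -> R) (f : 'I_m -> 'I_d -> 'I_d -> R)
  (p : 'I_m -> 'I_d -> R) :
  \sum_b mu b * \sum_j2 (- (di * \sum_j f b j j2)) * p b j2 =
  - (di * \sum_j \sum_j2 \sum_b f b j j2 * (mu b * p b j2)).
Proof.
transitivity (- di * \sum_b \sum_j2 \sum_j f b j j2 * (mu b * p b j2)).
  rewrite mulr_sumr; apply: eq_bigr => b _; rewrite mulr_sumr mulr_sumr.
  apply: eq_bigr => j2 _; rewrite -mulr_suml; set S := \sum_j _; ring.
rewrite mulNr; congr (- (_ * _)).
under eq_bigr => b _ do rewrite exchange_big.
rewrite exchange_big; apply: eq_bigr => j _.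
by rewrite exchange_big.
Qed.

Unset Implicit Arguments.

Theorem proposition3p15 (R : realType) (I W : finType) (d : nat)
  (C : tensor R I d) (M : W -> tensor R I d.-1) :
  (0 < d)%N ->
  sym_tensor C ->
  injective M ->
  (forall w, sym_tensor (M w) /\ sym_decomposable (M w)) ->
  forall (T : tensor R I d) (r : nat),
    sym_tensor T -> in_mod C M T -> srk_le T r ->
    srk_le (SAdj C M) (r + d * \dim (SpanM M))%N.
Proof.
move=> d_gt0 symC _ Mdec T r symT [F [FS HT]] [lam [v Tdef]].
case: d d_gt0 C M symC Mdec T symT F FS HT Tdef => // d' _ C M symC Mdec T symT F FS HT Tdef.
have [Y [sYM bY]] := exists_basis_sub [seq M w | w <- enum W].
pose Yt := in_tuple Y.
have bYt : basis_of (SpanM M) Yt by [].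
have dimE := size_basis bYt.
set m := size Y in dimE Yt bYt.
have [mu [u Hmu]] : exists (mu : 'I_m -> R) (u : 'I_m -> I -> R),
    forall b : 'I_m, Yt`_b = rank_one d' (mu b) (u b).
  have H (b : 'I_m) : exists p : R * (I -> R), Yt`_b = rank_one d' p.1 p.2.
    have : Yt`_b \in [seq M w | w <- enum W] by apply: sYM; apply: mem_nth.
    case/mapP => w _ ->; have [_ [lm [vv ->]]] := Mdec w; by exists (lm, vv).
  have [f Hf] := @fin_all_exists _ (fun _ => (R * (I -> R))%type)
     (fun (b : 'I_m) p => Yt`_b = rank_one d' p.1 p.2) H.
  by exists (fun b => (f b).1), (fun b => (f b).2).
pose cf (b : 'I_m) X := coord Yt b X.
have Hexp X : X \in SpanM M -> forall mm,
    X mm = \sum_b cf b X * (mu b * \prod_i u b (mm i)).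
  move=> XS mm; rewrite {1}(coord_basis bYt XS) sum_ffunE.
  by apply: eq_bigr => b _; rewrite ffunE Hmu ffunE.
have [c [t Hw]] := weights R d'.+1.
set g := \sum_(s < d'.+1) c s * t s ^+ d'.+1.
pose di : R := d'.+1%:R^-1.
pose a (b : 'I_m) (x : I) := di * \sum_j cf b (F j x).
pose lv (b : 'I_m) (z : (I + W)%type) : R := if z is inl x then u b x else 0.
pose nI (b : 'I_m) (z : (I + W)%type) : R := if z is inl x then - a b x else 0.
pose nW (b : 'I_m) (z : (I + W)%type) : R := if z is inr w then cf b (M w) else 0.
pose ext (f : I -> R) (z : (I + W)%type) : R := if z is inl x then f x else 0.
pose zb b (s : 'I_d'.+1) z := (nI b z + nW b z - g / d'.+1%:R * lv b z) + t s * lv b z.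
suff Eq : SAdj C M = \sum_(q < r) rank_one d'.+1 (lam q) (ext (v q)) +
    \sum_(b < m) \sum_(s < d'.+1) rank_one d'.+1 (c s * mu b) (zb b s).
  rewrite Eq dimE mulnC; apply: srk_le_add; first by exists lam, (fun q => ext (v q)).
  by apply: srk_le_sum => b; exists (fun s => c s * mu b), (zb b).
apply/ffunP => k.
rewrite ffunE [RHS]ffunE !sum_ffunE.
under [in RHS]eq_bigr => q _ do rewrite rank_oneE.
have E2 b : (\sum_(s < d'.+1) rank_one d'.+1 (c s * mu b) (zb b s)) k =
   mu b * \sum_j (nI b (k j) + nW b (k j)) * \prod_(i < d') lv b (k (lift j i)).
  rewrite -(key2 Hw (fun j => nI b (k j) + nW b (k j)) (fun j => lv b (k j))).
  rewrite sum_ffunE mulr_sumr; apply: eq_bigr => s _; rewrite rank_oneE -mulrA mulrCA.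
  by [].
rewrite (eq_bigr _ (fun b _ => E2 b)).
pose L (b : 'I_m) (j : 'I_d'.+1) := \prod_(i < d') lv b (k (lift j i)).
have Split : \sum_b mu b * \sum_j (nI b (k j) + nW b (k j)) * L b j =
    \sum_b mu b * \sum_j nI b (k j) * L b j + \sum_b mu b * \sum_j nW b (k j) * L b j.
  rewrite -big_split; apply: eq_bigr => b _ => /=; rewrite -mulrDr -big_split.
  by congr (_ * _); apply: eq_bigr => j _; rewrite mulrDl.
rewrite Split addrA; congr (_ + _); last first.
  symmetry.
  rewrite (eq_bigr (fun b => \sum_j mu b * (nW b (k j) * L b j))); last first.
    by move=> b _; rewrite mulr_sumr.
  rewrite exchange_big /=; symmetry; apply: eq_bigr => j _.
  case Ekj: (k j) => [x|w0].
    rewrite big1; last first.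
      by move=> w _; apply: big_pred0 => mm.
    by symmetry; apply: big1 => b _; rewrite /nW /= mul0r mulr0.
  rewrite (bigD1 w0) //= [X in _ + X]big1 ?addr0; last first.
    move=> w nw; apply: big_pred0 => mm.
    by apply/negbTE/negP => /andP [/eqP [E] _]; rewrite E eqxx in nw.
  rewrite eqxx /=.
  symmetry.
  transitivity (\sum_b \sum_(mm : {ffun 'I_d' -> I} | [forall i, k (lift j i) == inl (mm i)])
                   cf b (M w0) * (mu b * \prod_i u b (mm i))).
    apply: eq_bigr => b _.
    rewrite /L (@allinl R I W d' (fun i => k (lift j i)) (fun _ => lv b)) //.
    rewrite /nW /= mulr_sumr mulr_sumr; apply: eq_bigr => mm _.
    by rewrite mulrCA.
  rewrite exchange_big /=; apply: eq_bigr => mm _.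
  rewrite [RHS]Hexp //; apply: memv_span; apply: map_f; apply: mem_enum.
have Y1 : \sum_q lam q * \prod_(i < d'.+1) ext (v q) (k i) =
    \sum_(cc : {ffun 'I_d'.+1 -> I} | [forall i, k i == inl (cc i)])
       \sum_q lam q * \prod_i v q (cc i).
  transitivity (\sum_q \sum_(cc : {ffun 'I_d'.+1 -> I} | [forall i, k i == inl (cc i)])
       lam q * \prod_i v q (cc i)).
    apply: eq_bigr => q _.
    by rewrite (@allinl R I W d'.+1 k (fun _ => ext (v q))) // mulr_sumr.
  by rewrite exchange_big.
have Y2 : \sum_b mu b * \sum_j nI b (k j) * L b j =
    \sum_(cc : {ffun 'I_d'.+1 -> I} | [forall i, k i == inl (cc i)])
       \sum_b mu b * \sum_j (- a b (cc j)) * \prod_(i < d') u b (cc (lift j i)).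
  transitivity (\sum_b \sum_j \sum_(cc : {ffun 'I_d'.+1 -> I} | [forall i, k i == inl (cc i)])
       mu b * ((- a b (cc j)) * \prod_(i < d') u b (cc (lift j i)))).
    apply: eq_bigr => b _; rewrite mulr_sumr; apply: eq_bigr => j _.
    by rewrite /L (@term_allinl R I W d'.+1 k j (nI b) (lv b)) // mulr_sumr.
  under eq_bigr => b _ do rewrite exchange_big.
  rewrite exchange_big /=; apply: eq_bigr => cc _; apply: eq_bigr => b _.
  by rewrite mulr_sumr.
rewrite Y1 Y2 -big_split; apply: eq_bigr => cc _ /=.
have Tc : T cc = \sum_q lam q * \prod_i v q (cc i).
  by rewrite Tdef sum_ffunE; apply: eq_bigr => q _; rewrite rank_oneE.
rewrite -Tc.
pose K (j j2 : 'I_d'.+1) := \sum_b cf b (F j (cc j2)) * (mu b * \prod_(i < d') u b (cc (lift j2 i))).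
have Hsym (s : 'S_d'.+1) : T cc - C cc = \sum_j K j (s j).
  have := HT [ffun i => cc (s i)]; rewrite symT symC => ->.
  rewrite addrAC subrr add0r; apply: eq_bigr => j _.
  rewrite (Hexp _ (FS _ _)); apply: eq_bigr => b _.
  rewrite !ffunE; congr (_ * (_ * _)).
  rewrite -(prod_perm_lift s (fun x => u b (cc x)) j); apply: eq_bigr => i _.
  by rewrite !ffunE.
have Hs := symavg Hsym.
have R1 := rearr di mu (fun b j j2 => cf b (F j (cc j2)))
  (fun b j2 => \prod_(i < d') u b (cc (lift j2 i))).
rewrite /= in R1.
rewrite /a R1 -Hs /di mulKf ?pnatr_eq0 //.
by rewrite opprB addrC subrK.
Qed.
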